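(* Let $\mathfrak{S}=(\mathcal{X},\mathsf{S},\gamma,(\Lambda_{a})_{a\in\mathcal{A}})$ be a spectral decomposition system for the Euclidean space $\mathfrak{H}$ and let $\varphi\colon\mathcal{X}\to[-\infty,+\infty]$ be $\mathsf{S}$-invariant. Then: (i) $\overline{\varphi\circ\gamma}=\overline{\varphi}\circ\gamma$; (ii) for every $X\in\mathfrak{H}$, $\varphi\circ\gamma$ is lower semicontinuous at $X$ if and only if $\varphi$ is lower semicontinuous at $\gamma(X)$; (iii) $\varphi\circ\gamma$ is lower semicontinuous if and only if $\varphi$ is lower semicontinuous.
   Context: A Euclidean space is a finite-dimensional real inner product space; inner products are written $\langle\cdot,\cdot\rangle$ and norms $\|\cdot\|$. Let $\mathfrak{H}$ and $\mathcal{X}$ be Euclidean spaces, let $\mathsf{S}$ be a group acting on $\mathcal{X}$ by linear isometries, let $\gamma\colon\mathfrak{H}\to\mathcal{X}$, and let $(\Lambda_a)_{a\in\mathcal{A}}$ be a family of linear operators from $\mathcal{X}$ to $\mathfrak{H}$. The orbit of $x$ is $\mathsf{S}\cdot x=\{s\cdot x: s\in\mathsf{S}\}$; a map $f$ on $\mathcal{X}$ is $\mathsf{S}$-invariant if $f(s\cdot x)=f(x)$ for all $s,x$. The tuple is a spectral decomposition system for $\mathfrak{H}$ if: [A] every $\Lambda_a$ is an isometry; [B] there exists an $\mathsf{S}$-invariant $\tau\colon\mathcal{X}\to\mathcal{X}$ with $\tau(x)\in\mathsf{S}\cdot x$ for all $x$ and $\gamma\circ\Lambda_a=\tau$ for all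 $a$; [C] for every $X\in\mathfrak{H}$ there is $a$ with $X=\Lambda_a\gamma(X)$; [D] $\langle X,Y\rangle\leq\langle\gamma(X),\gamma(Y)\rangle$ for all $X,Y\in\mathfrak{H}$. For a function $f\colon\mathcal{H}\to[-\infty,+\infty]$, $\overline{f}$ denotes its lower semicontinuous envelope, i.e. the pointwise supremum of all lower semicontinuous functions $g\colon\mathcal{H}\to[-\infty,+\infty]$ with $g\leq f$. *)

(* Defs.v *)
From HB Require Import structures.
From mathcomp Require Import all_boot all_order all_algebra.
From mathcomp Require Import all_classical all_reals all_analysis.
Set Implicit Arguments. Unset Strict Implicit. Unset Printing Implicit Defensive.
Import Order.TTheory GRing.Theory Num.Theory.
Import numFieldTopology.Exports numFieldNormedType.Exports.
Local Open Scope classical_set_scope.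
Local Open Scope ring_scope.

(* Euclidean spaces are modelled as row vectors 'rV[R]_n with the standard
   inner product; the topology is the canonical (norm) topology of 'rV[R]_n. *)
Definition dotv (R : realType) (n : nat) (u v : 'rV[R]_n) : R :=
  \sum_(i < n) u ord0 i * v ord0 i.

Definition enorm (R : realType) (n : nat) (u : 'rV[R]_n) : R :=
  Num.sqrt (dotv u u).

Definition linear_map (R : realType) (n m : nat) (f : 'rV[R]_n -> 'rV[R]_m) :=
  forall (a : R) (x y : 'rV[R]_n), f (a *: x + y) = a *: f x + f y.

Definition linear_isometry (R : realType) (n m : nat) (f : 'rV[R]_n -> 'rV[R]_m) :=
  linear_map f /\ forall x, enorm (f x) = enorm x.

Definition isometric_group_action (R : realType) (m : nat) (S : Type)
  (mul : S -> S -> S) (one : S) (inv : S -> S)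
  (act : S -> 'rV[R]_m -> 'rV[R]_m) : Prop :=
  [/\ (forall s t u, mul s (mul t u) = mul (mul s t) u),
      (forall s, mul one s = s),
      (forall s, mul (inv s) s = one),
      (forall x, act one x = x) /\
      (forall s t x, act (mul s t) x = act s (act t x))
    & (forall s, linear_isometry (act s))].

Definition orbit (R : realType) (m : nat) (S : Type)
  (act : S -> 'rV[R]_m -> 'rV[R]_m) (x : 'rV[R]_m) : set 'rV[R]_m :=
  [set act s x | s in [set: S]].

Definition S_invariant (R : realType) (m : nat) (S : Type) (T : Type)
  (act : S -> 'rV[R]_m -> 'rV[R]_m) (f : 'rV[R]_m -> T) : Prop :=
  forall s x, f (act s x) = f x.

(* Spectral decomposition system (X = 'rV_m, S, gamma, (Lam a)_{a : A})
   for H = 'rV_n, axioms [A]-[D]. *)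
Definition spectral_decomposition_system (R : realType) (n m : nat)
  (S : Type) (mul : S -> S -> S) (one : S) (inv : S -> S)
  (act : S -> 'rV[R]_m -> 'rV[R]_m)
  (gamma : 'rV[R]_n -> 'rV[R]_m) (A : Type) (Lam : A -> 'rV[R]_m -> 'rV[R]_n) : Prop :=
  [/\ isometric_group_action mul one inv act,
      (forall a, linear_isometry (Lam a)),
      (exists tau : 'rV[R]_m -> 'rV[R]_m,
          [/\ S_invariant act tau,
              (forall x, orbit act x (tau x))
            & (forall a, gamma \o Lam a = tau)]),
      (forall X, exists a, X = Lam a (gamma X))
    & (forall X Y, dotv X Y <= dotv (gamma X) (gamma Y))].

(* Lower semicontinuity at a point, matching mathcomp's lower_semicontinuous. *)
Definition lsc_at {T : topologicalType} {R : realType} (f : T -> \bar R) (x : T) :=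
  forall a : R, (a%:E < f x)%E ->
    exists2 V, nbhs x V & forall y, V y -> (a%:E < f y)%E.

Definition lsc_envelope {T : topologicalType} {R : realType} (f : T -> \bar R) : T -> \bar R :=
  fun x => ereal_sup [set g x | g in [set g : T -> \bar R |
                        lower_semicontinuous g /\ (forall y, (g y <= f y)%E)]].

(* Main.v *)
Require Import Defs.
From HB Require Import structures.
From mathcomp Require Import all_boot all_order all_algebra.
From mathcomp Require Import all_classical all_reals all_analysis.
From mathcomp Require Import ring lra.
Import Order.TTheory GRing.Theory Num.Theory.
Import numFieldTopology.Exports numFieldNormedType.Exports.
Local Open Scope classical_set_scope.
Local Open Scope ring_scope.

Section Aux.
Variable R : realType.

Lemma dotv_ge_entry p (u : 'rV[R]_p) j : u ord0 j ^+ 2 <= dotv u u.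
Proof.
rewrite /dotv (bigD1 j) //= -expr2 lerDl.
by apply: sumr_ge0 => i _; rewrite -expr2 sqr_ge0.
Qed.

Lemma dotv_small p (u : 'rV[R]_p) d :
  (forall j, `|u ord0 j| < d) -> dotv u u <= p%:R * d ^+ 2.
Proof.
move=> h; rewrite /dotv.
have -> : p%:R * d ^+ 2 = \sum_(i < p) d ^+ 2.
  by rewrite sumr_const card_ord mulr_natl.
apply: ler_sum => i _; rewrite -expr2 -real_normK ?num_real //.
have := h i => hi.
have d0 : 0 <= d by exact: le_trans (ltW hi).
by apply: lerXn2r; rewrite ?nnegrE //; exact: ltW.
Qed.

Lemma lip_cont p q (f : 'rV[R]_p -> 'rV[R]_q) :
  (forall x y, dotv (f x - f y) (f x - f y) <= dotv (x - y) (x - y)) ->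
  continuous f.
Proof.
move=> hf x V /nbhs_ballP [e e0 hV].
apply/nbhs_ballP; exists (e / (p%:R + 1)) => /=.
  by apply: divr_gt0 => //; rewrite ltr_wpDl.
move=> z [_ hz]; apply: hV; split => // i j; rewrite (ord1 i).
rewrite /ball /=.
have d0 : 0 < e / (p%:R + 1) by apply: divr_gt0 => //; rewrite ltr_wpDl.
set d := e / (p%:R + 1) in hz d0 *.
have hde : (p%:R + 1) * d = e by rewrite /d mulrC -mulrA mulVf ?mulr1 // gt_eqF // ltr_wpDl.
have h1 : dotv (x - z) (x - z) <= p%:R * d ^+ 2.
  apply: dotv_small => k; rewrite !mxE; have := hz ord0 k; by [].
have h2 := @dotv_ge_entry _ (f x - f z) j.
have h3 := hf x z.
rewrite !mxE in h2.
rewrite -(ltr_pXn2r (n:=2)) ?nnegrE //; last exact: ltW.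
rewrite real_normK ?num_real //.
have hp : 0 <= p%:R :> R by [].
have : p%:R * d ^+ 2 < e ^+ 2.
  rewrite -hde; nra.
lra.
Qed.


Lemma dotv_expand p (u v : 'rV[R]_p) :
  dotv (u - v) (u - v) = dotv u u - 2 * dotv u v + dotv v v.
Proof.
rewrite /dotv mulr_sumr -sumrB -big_split /=.
by apply: eq_bigr => i _; rewrite !mxE; ring.
Qed.

Lemma dotv_ge0 p (u : 'rV[R]_p) : 0 <= dotv u u.
Proof. by apply: sumr_ge0 => i _; rewrite -expr2 sqr_ge0. Qed.

Lemma enorm_dotv p q (u : 'rV[R]_p) (v : 'rV[R]_q) :
  enorm u = enorm v -> dotv u u = dotv v v.
Proof. by move=> h; apply/eqP; rewrite -eqr_sqrt ?dotv_ge0 //; apply/eqP. Qed.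

Lemma linear_sub p q (f : 'rV[R]_p -> 'rV[R]_q) :
  linear_map f -> forall x y, f (x - y) = f x - f y.
Proof.
move=> hf x y.
have -> : x - y = (-1) *: y + x by rewrite scaleN1r addrC.
by rewrite hf scaleN1r addrC.
Qed.

Lemma lsc_comp {T U : topologicalType} (f : U -> \bar R) (g : T -> U) x :
  lsc_at f (g x) -> {for x, continuous g} -> lsc_at (f \o g) x.
Proof.
move=> hf gc a ha; have [V hV hfV] := hf a ha.
by exists (g @^-1` V); [exact: gc | move=> y /hfV].
Qed.

End Aux.

Theorem proposition4p5 (R : realType) (n m : nat)
  (S : Type) (mul : S -> S -> S) (one : S) (inv : S -> S)
  (act : S -> 'rV[R]_m -> 'rV[R]_m)
  (gamma : 'rV[R]_n -> 'rV[R]_m) (A : Type) (Lam : A -> 'rV[R]_m -> 'rV[R]_n)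
  (phi : 'rV[R]_m -> \bar R) :
  spectral_decomposition_system mul one inv act gamma Lam ->
  S_invariant act phi ->
  [/\ lsc_envelope (phi \o gamma) = lsc_envelope phi \o gamma,
      (forall X : 'rV[R]_n, lsc_at (phi \o gamma) X <-> lsc_at phi (gamma X))
    & (lower_semicontinuous (phi \o gamma) <-> lower_semicontinuous phi)].
Proof.
move=> [_ hLam [tau [_ tauorb hgL]] hC hD] hphi.
have key : forall a x, phi (gamma (Lam a x)) = phi x.
  move=> a x; have := congr1 (fun h => h x) (hgL a) => /= ->.
  by have [s _ <-] := tauorb x; rewrite hphi.
have keyf : forall a, (phi \o gamma) \o Lam a = phi.
  by move=> a; apply/funext => x /=; exact: key.
have normg : forall X, dotv (gamma X) (gamma X) = dotv X X.
  move=> X; have [a ha] := hC X.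
  have [_ hn] := hLam a.
  rewrite [in RHS]ha; apply: enorm_dotv; by rewrite hn.
have gc : continuous gamma.
  apply: lip_cont => x y; rewrite !dotv_expand !normg.
  have := hD x y; lra.
have Lc : forall a, continuous (Lam a).
  move=> a; have [hl hn] := hLam a.
  apply: lip_cont => x y; rewrite -linear_sub //.
  by rewrite (@enorm_dotv R _ _ _ _ (hn (x - y))).
have ii : forall X : 'rV[R]_n, lsc_at (phi \o gamma) X <-> lsc_at phi (gamma X).
  move=> X; split => h; last exact: lsc_comp h (gc X).
  have [a ha] := hC X.
  have h' : lsc_at (phi \o gamma) (Lam a (gamma X)) by rewrite -ha.
  by rewrite -(keyf a); exact: lsc_comp h' (Lc a _).
split => //.
- apply/funext => X /=; rewrite /lsc_envelope; congr ereal_sup.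
  apply/seteqP; split => y /=.
  + move=> [h [hl hle] <-]; have [a ha] := hC X.
    exists (h \o Lam a); last by rewrite /= -ha.
    split; first by move=> x; exact: lsc_comp (hl _) (Lc a x).
    by move=> z /=; rewrite -(key a z); exact: hle.
  + move=> [g [hl hle] <-]; exists (g \o gamma) => //.
    split; first by move=> x; exact: lsc_comp (hl _) (gc x).
    by move=> z /=; exact: hle.
- split => h x.
  + have [a _] := hC 0.
    rewrite -(keyf a); exact: lsc_comp (h _) (Lc a x).
  + exact: lsc_comp (h _) (gc x).
Qed.
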